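(* Let $r>0$ and let $\mu:[0,\infty)\to\mathbb R$ and $\sigma:[0,\infty)\to(0,\infty)$ be globally Lipschitz continuous, and suppose there exist constants $\kappa\ge0$ and $c>0$ such that $x\mapsto\mu(x)-(r+c)x$ is strictly increasing on $[\kappa,\infty)$. Let $\psi\in C^2[0,\infty)$ be the non-negative increasing solution of $\frac{\sigma^2(x)}{2}f''(x)+\mu(x)f'(x)=rf(x)$ with $\psi(0)=0$, $\psi'(0)=1$. Then: (I) $\psi'(x)>0$ for all $x\ge0$. (II) There exists a unique point $b_2\in[\kappa,\infty)$ such that $\psi''(x)>0$ for $x\in(\kappa,b_2)$ and $\psi''(x)<0$ for $x\in(b_2,\infty)$. (III) $\psi'(n)\to0$ as $n\to\infty$. *)

(* Defs.v *)
From Stdlib Require Import Reals.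
From Coquelicot Require Import Coquelicot.
Open Scope R_scope.

Definition lipschitz_nonneg (f : R -> R) : Prop :=
  exists L : R, forall x y, 0 <= x -> 0 <= y -> Rabs (f x - f y) <= L * Rabs (x - y).

(* f is in C^2[0,oo) with first derivative f1 and second derivative f2:
   two-sided derivatives on (0,oo), one-sided (right) derivatives at 0,
   and f2 continuous on [0,oo) (right-continuous at 0). *)
Definition C2_nonneg (f f1 f2 : R -> R) : Prop :=
  (forall x, 0 < x -> is_derive f x (f1 x) /\ is_derive f1 x (f2 x) /\ continuous f2 x) /\
  filterlim (fun h => (f h - f 0) / h) (at_right 0) (locally (f1 0)) /\
  filterlim (fun h => (f1 h - f1 0) / h) (at_right 0) (locally (f2 0)) /\
  filterlim f2 (at_right 0) (locally (f2 0)).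

(* Main.v *)
Require Import Defs.
From Stdlib Require Import Reals Lra Classical.
From Coquelicot Require Import Coquelicot.
Open Scope R_scope.

Lemma filt_right (f : R -> R) l : filterlim f (at_right 0) (locally l) ->
  forall eps, 0 < eps -> exists d, 0 < d /\ forall h, 0 < h < d -> Rabs (f h - l) < eps.
Proof.
  intros H eps He.
  destruct (proj1 (filterlim_locally f l) H (mkposreal eps He)) as [d Hd].
  exists d. split. apply cond_pos. intros h [h1 h2]. apply (Hd h).
  - change (Rabs (h - 0) < d). rewrite Rminus_0_r, Rabs_pos_eq; lra.
  - exact h1.
Qed.

Lemma cont_eps (f : R -> R) x : continuous f x ->
  forall eps, 0 < eps -> exists d, 0 < d /\ forall y, Rabs (y - x) < d -> Rabs (f y - f x) < eps.
Proof.
  intros H eps He.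
  destruct (proj1 (filterlim_locally f (f x)) H (mkposreal eps He)) as [d Hd].
  exists d. split. apply cond_pos. intros y Hy. apply (Hd y). exact Hy.
Qed.

Lemma deriv_eps (f : R -> R) x l : is_derive f x l ->
  forall eps, 0 < eps -> exists d, 0 < d /\ forall h, h <> 0 -> Rabs h < d ->
     Rabs ((f (x + h) - f x) / h - l) < eps.
Proof.
  intros H eps He. apply is_derive_Reals in H.
  destruct (H eps He) as [d Hd]. exists d. split. apply cond_pos. exact Hd.
Qed.

Lemma mvt' (f df : R -> R) a b : a < b ->
  (forall x, a <= x <= b -> is_derive f x (df x)) ->
  exists c, a <= c <= b /\ f b - f a = df c * (b - a).
Proof.
  intros Hab Hd.
  assert (E1 : Rmin a b = a) by (apply Rmin_left; lra).
  assert (E2 : Rmax a b = b) by (apply Rmax_right; lra).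
  destruct (MVT_gen f a b df) as [c [Hc Hf]].
  - rewrite E1, E2. intros x Hx. apply Hd. lra.
  - rewrite E1, E2. intros x Hx. apply continuity_pt_filterlim.
    apply (ex_derive_continuous f x). exists (df x). apply Hd. exact Hx.
  - rewrite E1, E2 in Hc. exists c. split; assumption.
Qed.

Lemma mono_inc (f df : R -> R) a :
  (forall x, a <= x -> is_derive f x (df x)) -> (forall x, a <= x -> 0 <= df x) ->
  forall x y, a <= x -> x <= y -> f x <= f y.
Proof.
  intros Hd Hp x y Hx Hxy. destruct (Req_dec x y) as [->|Hne]. lra.
  destruct (mvt' f df x y) as [c [Hc Hf]]. lra. intros; apply Hd; lra.
  assert (0 <= df c) by (apply Hp; lra).
  assert (0 <= df c * (y - x)) by (apply Rmult_le_pos; lra). lra.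
Qed.

Lemma mono_dec (f df : R -> R) a :
  (forall x, a <= x -> is_derive f x (df x)) -> (forall x, a <= x -> df x <= 0) ->
  forall x y, a <= x -> x <= y -> f y <= f x.
Proof.
  intros Hd Hp x y Hx Hxy. destruct (Req_dec x y) as [->|Hne]. lra.
  destruct (mvt' f df x y) as [c [Hc Hf]]. lra. intros; apply Hd; lra.
  assert (df c <= 0) by (apply Hp; lra).
  assert (df c * (y - x) <= 0) by (apply Rmult_le_0_r; lra). lra.
Qed.

Lemma first_cross (g : R -> R) a b : a < b -> g a < 0 -> 0 <= g b ->
  (forall t, a <= t <= b -> forall eps, 0 < eps -> exists d, 0 < d /\
      forall y, Rabs (y - t) < d -> Rabs (g y - g t) < eps) ->
  exists w, a < w <= b /\ g w = 0 /\ forall t, a <= t < w -> g t < 0.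
Proof.
  intros Hab Ha Hb Hc.
  set (E := fun y => a <= y <= b /\ forall t, a <= t <= y -> g t < 0).
  assert (Hbd : bound E) by (exists b; intros y [Hy _]; lra).
  assert (HEa : E a) by (split; [lra| intros t Ht; replace t with a by lra; exact Ha]).
  destruct (completeness E Hbd (ex_intro _ a HEa)) as [w [Hub Hlub]].
  assert (Haw : a <= w) by (apply Hub; exact HEa).
  assert (Hwb : w <= b) by (apply Hlub; intros y [Hy _]; lra).
  assert (Hlt : forall t, a <= t < w -> g t < 0).
  { intros t Ht. destruct (Rlt_or_le (g t) 0) as [H|H]; [exact H|].
    exfalso. assert (w <= t); [|lra]. apply Hlub. intros y [Hy Hy2].
    destruct (Rle_or_lt y t) as [H1|H1]; [exact H1|].
    assert (g t < 0) by (apply Hy2; lra). lra. }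
  destruct (Rtotal_order (g w) 0) as [Hn|[Hz|Hp]].
  - exfalso. destruct (Hc w (conj Haw Hwb) (- g w)) as [d [Hd Hd2]]. lra.
    assert (Hwb' : w < b) by (destruct (Req_dec w b) as [->|]; lra).
    set (y' := Rmin (w + d/2) b).
    assert (E y').
    { split. unfold y'; split; [apply Rmin_glb; lra| apply Rmin_r].
      intros t Ht. destruct (Rlt_or_le t w) as [H1|H1]. apply Hlt; lra.
      assert (t <= w + d/2) by (apply Rle_trans with y'; [lra| apply Rmin_l]).
      assert (Rabs (t - w) < d) by (rewrite Rabs_pos_eq; lra).
      specialize (Hd2 t H0). apply Rabs_def2 in Hd2. lra. }
    assert (y' <= w) by (apply Hub; exact H).
    assert (w < y') by (unfold y'; apply Rmin_glb_lt; lra). lra.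
  - exists w. assert (a <> w) by (intro; subst; lra). split; [lra|split; [exact Hz|exact Hlt]].
  - exfalso. destruct (Hc w (conj Haw Hwb) (g w)) as [d [Hd Hd2]]. lra.
    assert (a < w) by (destruct (Req_dec a w) as [->|]; lra).
    set (t := Rmax a (w - d/2)).
    assert (a <= t) by apply Rmax_l.
    assert (t < w) by (apply Rmax_lub_lt; lra).
    assert (w - d/2 <= t) by apply Rmax_r.
    assert (Rabs (t - w) < d) by (rewrite Rabs_left1; lra).
    specialize (Hd2 t H3). apply Rabs_def2 in Hd2.
    assert (g t < 0) by (apply Hlt; lra). lra.
Qed.

Lemma deriv_ge0_right f x l : is_derive f x l ->
  (exists d0, 0 < d0 /\ forall h, 0 < h < d0 -> f x <= f (x + h)) -> 0 <= l.
Proof.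
  intros H [d0 [Hd0 Hm]]. apply is_derive_Reals in H.
  destruct (Rle_or_lt 0 l) as [Hl|Hl]; [exact Hl|exfalso].
  destruct (H (- l)) as [d Hd]. lra.
  set (h := Rmin d d0 / 2).
  assert (0 < Rmin d d0) by (apply Rmin_glb_lt; [apply cond_pos|lra]).
  assert (Rmin d d0 <= d) by apply Rmin_l. assert (Rmin d d0 <= d0) by apply Rmin_r.
  assert (Hq : Rabs ((f (x + h) - f x) / h - l) < - l).
  { apply Hd. unfold h; lra. rewrite Rabs_pos_eq; unfold h; lra. }
  assert (0 <= (f (x + h) - f x) / h).
  { apply Rdiv_le_0_compat. assert (f x <= f (x+h)) by (apply Hm; unfold h; lra). lra. unfold h; lra. }
  apply Rabs_def2 in Hq. lra.
Qed.

Lemma deriv_le0_left f x l : is_derive f x l ->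
  (exists d0, 0 < d0 /\ forall h, 0 < h < d0 -> f x <= f (x - h)) -> l <= 0.
Proof.
  intros H [d0 [Hd0 Hm]]. apply is_derive_Reals in H.
  destruct (Rle_or_lt l 0) as [Hl|Hl]; [exact Hl|exfalso].
  destruct (H l) as [d Hd]. lra.
  set (h := Rmin d d0 / 2).
  assert (0 < Rmin d d0) by (apply Rmin_glb_lt; [apply cond_pos|lra]).
  assert (Rmin d d0 <= d) by apply Rmin_l. assert (Rmin d d0 <= d0) by apply Rmin_r.
  assert (Hq : Rabs ((f (x + - h) - f x) / - h - l) < l).
  { apply Hd. unfold h; lra. rewrite Rabs_Ropp, Rabs_pos_eq; unfold h; lra. }
  assert (0 <= (f (x + - h) - f x) / h).
  { apply Rdiv_le_0_compat. assert (f x <= f (x - h)) by (apply Hm; unfold h; lra).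
    replace (x + - h) with (x - h) by ring. lra. unfold h; lra. }
  assert ((f (x + - h) - f x) / - h = - ((f (x + - h) - f x) / h)).
  { field. unfold h; lra. }
  apply Rabs_def2 in Hq. lra.
Qed.

Lemma cross_sign (r c : R) (mu sigma psi psi1 psi2 : R -> R) z u :
  0 < r -> 0 < c -> 0 < psi1 z -> 0 < psi1 (z + u) -> u <> 0 -> Rabs u < 1 ->
  r * psi z = mu z * psi1 z ->
  (sigma (z + u)) ^ 2 / 2 * psi2 (z + u) + mu (z + u) * psi1 (z + u) = r * psi (z + u) ->
  0 < sigma (z + u) ->
  0 < u * (mu (z + u) - mu z - (r + c) * u) ->
  Rabs ((psi (z + u) - psi z) / u - psi1 z) < c * psi1 z / (4 * r) ->
  Rabs ((psi1 (z + u) - psi1 z) / u) < c * psi1 z / (4 * (Rabs (mu z) + r + c)) ->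
  u * psi2 (z + u) < 0.
Proof.
  intros hr hc hp hpu hu hu1 hz hode hs hD hQ1 hQ2.
  set (Q1 := (psi (z + u) - psi z) / u) in *.
  set (Q2 := (psi1 (z + u) - psi1 z) / u) in *.
  set (D := mu (z + u) - mu z - (r + c) * u) in *.
  set (e1 := c * psi1 z / (4 * r)) in *.
  set (e2 := c * psi1 z / (4 * (Rabs (mu z) + r + c))) in *.
  assert (E1 : psi (z + u) = psi z + u * Q1) by (unfold Q1; field; exact hu).
  assert (E2 : psi1 (z + u) = psi1 z + u * Q2) by (unfold Q2; field; exact hu).
  assert (Emu : mu (z + u) = mu z + (r + c) * u + D) by (unfold D; ring).
  set (B := r * Q1 - mu z * Q2 - (r + c) * psi1 (z + u)).
  assert (Eh : r * psi (z + u) - mu (z + u) * psi1 (z + u) = u * B - D * psi1 (z + u)).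
  { apply Rminus_diag_uniq.
    replace (r * psi (z + u) - mu (z + u) * psi1 (z + u) - (u * B - D * psi1 (z + u)))
      with (r * psi z - mu z * psi1 z) by (unfold B; rewrite Emu, E1, E2; ring). lra. }
  assert (He1 : r * e1 = c * psi1 z / 4) by (unfold e1; field; lra).
  assert (Hm0 : 0 < Rabs (mu z) + r + c) by (pose proof (Rabs_pos (mu z)); lra).
  assert (He2 : (Rabs (mu z) + r + c) * e2 = c * psi1 z / 4) by (unfold e2; field; lra).
  apply Rabs_def2 in hQ1.
  assert (B1 : - (mu z * Q2) <= Rabs (mu z) * Rabs Q2).
  { rewrite <- Rabs_mult. rewrite <- Rabs_Ropp. apply Rle_abs. }
  assert (B2 : - ((r + c) * (u * Q2)) <= (r + c) * Rabs Q2).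
  { apply Rle_trans with (Rabs ((r + c) * (u * Q2))).
    rewrite <- Rabs_Ropp. apply Rle_abs. rewrite Rabs_mult, Rabs_mult, (Rabs_pos_eq (r+c)) by lra.
    apply Rmult_le_compat_l. lra. rewrite <- (Rmult_1_l (Rabs Q2)) at 2.
    apply Rmult_le_compat_r. apply Rabs_pos. lra. }
  assert (B3 : Rabs (mu z) * Rabs Q2 + (r + c) * Rabs Q2 <= c * psi1 z / 4).
  { rewrite <- He2. replace (Rabs (mu z) * Rabs Q2 + (r + c) * Rabs Q2) with
      ((Rabs (mu z) + r + c) * Rabs Q2) by ring. apply Rmult_le_compat_l; lra. }
  assert (B4 : r * Q1 <= r * psi1 z + c * psi1 z / 4).
  { rewrite <- He1. rewrite <- Rmult_plus_distr_l. apply Rmult_le_compat_l; lra. }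
  assert (HB : B <= - (c * psi1 z) / 2).
  { unfold B. rewrite E2. lra. }
  assert (0 < c * psi1 z) by (apply Rmult_lt_0_compat; lra).
  assert (Hu2 : 0 < u * u) by (apply Rsqr_pos_lt; exact hu).
  assert (Huh : u * (r * psi (z + u) - mu (z + u) * psi1 (z + u)) < 0).
  { rewrite Eh. replace (u * (u * B - D * psi1 (z + u))) with ((u * u) * B - (u * D) * psi1 (z + u)) by ring.
    assert (0 < (u * u) * (- B)) by (apply Rmult_lt_0_compat; lra).
    assert (0 < (u * D) * psi1 (z + u)) by (apply Rmult_lt_0_compat; lra). lra. }
  rewrite <- hode in Huh.
  replace (u * ((sigma (z + u)) ^ 2 / 2 * psi2 (z + u) + mu (z + u) * psi1 (z + u) - mu (z + u) * psi1 (z + u)))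
    with (((sigma (z + u)) ^ 2 / 2) * (u * psi2 (z + u))) in Huh by ring.
  assert (Hs2 : 0 < (sigma (z + u)) ^ 2 / 2) by (apply Rdiv_lt_0_compat; [apply pow_lt; lra| lra]).
  destruct (Rlt_or_le (u * psi2 (z + u)) 0) as [Hn|Hn]; [exact Hn|].
  assert (0 <= (sigma (z + u)) ^ 2 / 2 * (u * psi2 (z + u))) by (apply Rmult_le_pos; lra). lra.
Qed.

Theorem lemmaA2 (r kappa c : R) (mu sigma psi psi1 psi2 : R -> R)
  (hr : 0 < r)
  (hmu : lipschitz_nonneg mu)
  (hsig : lipschitz_nonneg sigma)
  (hsigpos : forall x, 0 <= x -> 0 < sigma x)
  (hkappa : 0 <= kappa) (hc : 0 < c)
  (hincr : forall x y, kappa <= x -> x < y ->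
             mu x - (r + c) * x < mu y - (r + c) * y)
  (hC2 : C2_nonneg psi psi1 psi2)
  (hode : forall x, 0 <= x ->
            (sigma x) ^ 2 / 2 * psi2 x + mu x * psi1 x = r * psi x)
  (hnonneg : forall x, 0 <= x -> 0 <= psi x)
  (hmono : forall x y, 0 <= x -> x <= y -> psi x <= psi y)
  (h0 : psi 0 = 0) (h1 : psi1 0 = 1) :
  (forall x, 0 <= x -> 0 < psi1 x) /\
  (exists! b2 : R, kappa <= b2 /\
      (forall x, kappa < x < b2 -> 0 < psi2 x) /\
      (forall x, b2 < x -> psi2 x < 0)) /\
  is_lim_seq (fun n : nat => psi1 (INR n)) 0.
Proof.
  destruct hC2 as [HC [Hr0 [Hr1 Hc0]]].
  assert (RD0 : forall z, 0 <= z -> forall eps, 0 < eps -> exists d, 0 < d /\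
     forall h, 0 < h < d -> Rabs ((psi (z + h) - psi z) / h - psi1 z) < eps).
  { intros z Hz eps He. destruct (Req_dec z 0) as [->|Hz0].
    - destruct (filt_right _ _ Hr0 eps He) as [d [Hd Hd2]]. exists d. split; [exact Hd|].
      intros h Hh. rewrite Rplus_0_l. apply Hd2. exact Hh.
    - destruct (deriv_eps psi z (psi1 z) (proj1 (HC z ltac:(lra))) eps He) as [d [Hd Hd2]].
      exists d. split; [exact Hd|]. intros h Hh. apply Hd2. lra. rewrite Rabs_pos_eq; lra. }
  assert (RD1 : forall z, 0 <= z -> forall eps, 0 < eps -> exists d, 0 < d /\
     forall h, 0 < h < d -> Rabs ((psi1 (z + h) - psi1 z) / h - psi2 z) < eps).
  { intros z Hz eps He. destruct (Req_dec z 0) as [->|Hz0].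
    - destruct (filt_right _ _ Hr1 eps He) as [d [Hd Hd2]]. exists d. split; [exact Hd|].
      intros h Hh. rewrite Rplus_0_l. apply Hd2. exact Hh.
    - destruct (deriv_eps psi1 z (psi2 z) (proj1 (proj2 (HC z ltac:(lra)))) eps He) as [d [Hd Hd2]].
      exists d. split; [exact Hd|]. intros h Hh. apply Hd2. lra. rewrite Rabs_pos_eq; lra. }
  assert (RC : forall z, 0 <= z -> forall eps, 0 < eps -> exists d, 0 < d /\
     forall y, z < y < z + d -> Rabs (psi2 y - psi2 z) < eps).
  { intros z Hz eps He. destruct (Req_dec z 0) as [->|Hz0].
    - destruct (filt_right _ _ Hc0 eps He) as [d [Hd Hd2]]. exists d. split; [exact Hd|].
      intros y Hy. apply Hd2. lra.
    - destruct (cont_eps psi2 z (proj2 (proj2 (HC z ltac:(lra)))) eps He) as [d [Hd Hd2]].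
      exists d. split; [exact Hd|]. intros y Hy. apply Hd2. rewrite Rabs_pos_eq; lra. }
  assert (Hpsipos : forall x, 0 < x -> 0 < psi x).
  { destruct (RD0 0 (Rle_refl 0) (1/2) ltac:(lra)) as [d [Hd Hd2]].
    assert (Hsmall : forall h, 0 < h < d -> 0 < psi h).
    { intros h Hh. specialize (Hd2 h Hh). rewrite Rplus_0_l, h0, h1, Rminus_0_r in Hd2.
      apply Rabs_def2 in Hd2. replace (psi h) with (psi h / h * h) by (field; lra).
      apply Rmult_lt_0_compat; lra. }
    intros x Hx. destruct (Rlt_or_le x d) as [Hxd|Hxd]. apply Hsmall; lra.
    apply Rlt_le_trans with (psi (d/2)). apply Hsmall; lra. apply hmono; lra. }
  assert (Hge : forall x, 0 < x -> 0 <= psi1 x).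
  { intros x Hx. apply (deriv_ge0_right psi x). exact (proj1 (HC x Hx)).
    exists 1. split. lra. intros h Hh. apply hmono; lra. }
  assert (HI : forall x, 0 <= x -> 0 < psi1 x).
  { intros x Hx. destruct (Req_dec x 0) as [->|Hx0]. lra.
    assert (Hx' : 0 < x) by lra.
    destruct (Rle_lt_or_eq_dec 0 (psi1 x) (Hge x Hx')) as [H|H]. exact H. exfalso.
    assert (A1 : 0 <= psi2 x).
    { apply (deriv_ge0_right psi1 x). exact (proj1 (proj2 (HC x Hx'))).
      exists 1. split. lra. intros h Hh. rewrite <- H. apply Hge; lra. }
    assert (A2 : psi2 x <= 0).
    { apply (deriv_le0_left psi1 x). exact (proj1 (proj2 (HC x Hx'))).
      exists x. split. lra. intros h Hh. rewrite <- H. apply Hge; lra. }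
    assert (psi2 x = 0) by lra.
    specialize (hode x Hx). rewrite H0, <- H in hode.
    specialize (Hpsipos x Hx'). assert (0 < r * psi x) by (apply Rmult_lt_0_compat; lra).
    lra. }
  split; [exact HI|].
  assert (Hzero : forall z, 0 <= z -> psi2 z = 0 -> r * psi z = mu z * psi1 z).
  { intros z Hz H. rewrite <- (hode z Hz), H. ring. }
  assert (Hs2 : forall z, 0 <= z -> 0 < (sigma z) ^ 2 / 2).
  { intros z Hz. apply Rdiv_lt_0_compat; [apply pow_lt; apply hsigpos; lra| lra]. }
  set (e1 := fun z => c * psi1 z / (4 * r)).
  set (e2 := fun z => c * psi1 z / (4 * (Rabs (mu z) + r + c))).
  assert (He1 : forall z, 0 <= z -> 0 < e1 z).
  { intros z Hz. unfold e1. apply Rdiv_lt_0_compat. apply Rmult_lt_0_compat; [lra| apply HI; lra]. lra. }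
  assert (He2 : forall z, 0 <= z -> 0 < e2 z).
  { intros z Hz. unfold e2. apply Rdiv_lt_0_compat. apply Rmult_lt_0_compat; [lra| apply HI; lra].
    pose proof (Rabs_pos (mu z)). lra. }
  assert (HPr : forall z, kappa <= z -> psi2 z = 0 -> exists d, 0 < d /\
     forall u, 0 < u < d -> psi2 (z + u) < 0).
  { intros z Hz H. assert (Hz0 : 0 <= z) by lra.
    destruct (RD0 z Hz0 (e1 z) (He1 z Hz0)) as [d1 [Hd1 Hd1']].
    destruct (RD1 z Hz0 (e2 z) (He2 z Hz0)) as [d2 [Hd2 Hd2']].
    exists (Rmin 1 (Rmin d1 d2)). split.
    { apply Rmin_glb_lt. lra. apply Rmin_glb_lt; lra. }
    intros u Hu. pose proof (Rmin_l 1 (Rmin d1 d2)). pose proof (Rmin_r 1 (Rmin d1 d2)).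
    pose proof (Rmin_l d1 d2). pose proof (Rmin_r d1 d2).
    assert (u * psi2 (z + u) < 0).
    { apply (cross_sign r c mu sigma psi psi1 psi2 z u hr hc).
      apply HI; lra. apply HI; lra. lra. rewrite Rabs_pos_eq; lra.
      apply Hzero; assumption. apply hode; lra. apply hsigpos; lra.
      apply Rmult_lt_0_compat. lra. assert (mu z - (r + c) * z < mu (z + u) - (r + c) * (z + u)).
      apply hincr; lra. lra.
      apply Hd1'. lra.
      specialize (Hd2' u ltac:(lra)). rewrite H, Rminus_0_r in Hd2'. exact Hd2'. }
    destruct (Rlt_or_le (psi2 (z + u)) 0) as [Hn|Hn]. exact Hn.
    assert (0 <= u * psi2 (z + u)) by (apply Rmult_le_pos; lra). lra. }
  assert (HPl : forall z, kappa <= z -> 0 < z -> psi2 z = 0 -> exists d, 0 < d /\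
     forall v, 0 < v < d -> kappa <= z - v -> 0 < psi2 (z - v)).
  { intros z Hz Hz0' H. assert (Hz0 : 0 <= z) by lra.
    destruct (deriv_eps psi z (psi1 z) (proj1 (HC z Hz0')) (e1 z) (He1 z Hz0)) as [d1 [Hd1 Hd1']].
    destruct (deriv_eps psi1 z (psi2 z) (proj1 (proj2 (HC z Hz0'))) (e2 z) (He2 z Hz0)) as [d2 [Hd2 Hd2']].
    exists (Rmin 1 (Rmin d1 d2)). split.
    { apply Rmin_glb_lt. lra. apply Rmin_glb_lt; lra. }
    intros v Hv Hk. pose proof (Rmin_l 1 (Rmin d1 d2)). pose proof (Rmin_r 1 (Rmin d1 d2)).
    pose proof (Rmin_l d1 d2). pose proof (Rmin_r d1 d2).
    assert (Hrv : Rabs (- v) < 1 /\ Rabs (- v) < d1 /\ Rabs (-v) < d2).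
    { rewrite Rabs_Ropp, Rabs_pos_eq; lra. }
    replace (z - v) with (z + - v) in * by ring.
    assert (- v * psi2 (z + - v) < 0).
    { apply (cross_sign r c mu sigma psi psi1 psi2 z (- v) hr hc).
      apply HI; lra. apply HI; lra. lra. lra.
      apply Hzero; assumption. apply hode; lra. apply hsigpos; lra.
      assert (mu (z + - v) - (r + c) * (z + - v) < mu z - (r + c) * z).
      apply hincr; lra. replace (- v * (mu (z + - v) - mu z - (r + c) * - v)) with
        (v * (mu z - mu (z + - v) - (r + c) * v)) by ring.
      apply Rmult_lt_0_compat; lra.
      apply Hd1'. lra. lra.
      specialize (Hd2' (- v) ltac:(lra) ltac:(lra)). rewrite H, Rminus_0_r in Hd2'. exact Hd2'. }
    destruct (Rlt_or_le 0 (psi2 (z + - v))) as [Hn|Hn]. exact Hn.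
    assert (0 <= - v * psi2 (z + - v)). 
    { replace (- v * psi2 (z + - v)) with (v * (- psi2 (z + - v))) by ring. apply Rmult_le_pos; lra. }
    lra. }
  assert (HPneg : forall z, kappa <= z -> psi2 z <= 0 -> forall y, z < y -> psi2 y < 0).
  { intros z Hz Hn.
    assert (Step1 : exists d, 0 < d /\ forall y, z < y < z + d -> psi2 y < 0).
    { destruct (Rle_lt_or_eq_dec _ _ Hn) as [Hlt|Heq].
      - destruct (RC z ltac:(lra) (- psi2 z) ltac:(lra)) as [d [Hd Hd2]].
        exists d. split; [exact Hd|]. intros y Hy. specialize (Hd2 y Hy).
        apply Rabs_def2 in Hd2. lra.
      - destruct (HPr z Hz Heq) as [d [Hd Hd2]]. exists d. split; [exact Hd|].
        intros y Hy. replace y with (z + (y - z)) by ring. apply Hd2. lra. }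
    destruct Step1 as [d [Hd Hd2]].
    intros y Hy. destruct (Rlt_or_le (psi2 y) 0) as [Hyn|Hyp]; [exact Hyn|exfalso].
    assert (Hyd : z + d <= y).
    { destruct (Rlt_or_le y (z + d)) as [H|H]; [|exact H]. specialize (Hd2 y ltac:(lra)). lra. }
    set (a := z + d / 2).
    assert (Ha : psi2 a < 0) by (apply Hd2; unfold a; lra).
    destruct (first_cross psi2 a y) as [w [Hw1 [Hw2 Hw3]]].
    unfold a; lra. exact Ha. exact Hyp.
    { intros t Ht. apply (cont_eps psi2 t). apply (proj2 (proj2 (HC t ltac:(unfold a in *; lra)))). }
    destruct (HPl w ltac:(unfold a in *; lra) ltac:(unfold a in *; lra) Hw2) as [d' [Hd' Hd'2]].
    set (v := Rmin d' (w - a) / 2).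
    assert (0 < Rmin d' (w - a)) by (apply Rmin_glb_lt; lra).
    pose proof (Rmin_l d' (w - a)). pose proof (Rmin_r d' (w - a)).
    assert (0 < psi2 (w - v)) by (apply Hd'2; unfold v, a in *; lra).
    assert (psi2 (w - v) < 0) by (apply Hw3; unfold v in *; lra). lra. }
  assert (HA : exists x1, kappa <= x1 /\ psi2 x1 <= 0).
  { apply NNPP. intro Hno.
    assert (Hall : forall x, kappa <= x -> 0 < psi2 x).
    { intros x Hx. destruct (Rlt_or_le 0 (psi2 x)) as [H|H]. exact H. exfalso. apply Hno. exists x. split; assumption. }
    set (x0 := kappa + 1). set (p := psi1 x0).
    assert (Hp : 0 < p) by (apply HI; unfold x0; lra).
    assert (Hinc : forall x y, x0 <= x -> x <= y -> psi1 x <= psi1 y).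
    { apply (mono_inc psi1 psi2 x0). intros x Hx. apply (proj1 (proj2 (HC x ltac:(unfold x0 in *; lra)))).
      intros x Hx. left. apply Hall. unfold x0 in *; lra. }
    set (s := (Rabs (mu x0) + r * psi x0 / p + 1) / c).
    assert (Hpx0 : 0 <= psi x0) by (apply hnonneg; unfold x0; lra).
    assert (Hq : 0 <= r * psi x0 / p) by (apply Rdiv_le_0_compat; [apply Rmult_le_pos; lra| lra]).
    assert (Hs : 0 < s) by (unfold s; apply Rdiv_lt_0_compat; pose proof (Rabs_pos (mu x0)); lra).
    assert (Hcs : c * s = Rabs (mu x0) + r * psi x0 / p + 1) by (unfold s; field; lra).
    set (x := x0 + s).
    destruct (mvt' psi psi1 x0 x) as [th [Hth Hmvt]]. unfold x; lra.
    { intros t Ht. apply (proj1 (HC t ltac:(unfold x0 in *; lra))). }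
    assert (Hpx : psi1 th <= psi1 x) by (apply Hinc; lra).
    assert (Hpx2 : p <= psi1 x) by (apply Hinc; unfold x; lra).
    assert (A1 : psi x <= psi x0 + psi1 x * s).
    { replace (x - x0) with s in Hmvt by (unfold x; ring).
      assert (psi1 th * s <= psi1 x * s) by (apply Rmult_le_compat_r; lra). lra. }
    assert (Hmu : mu x0 + (r + c) * s < mu x).
    { assert (mu x0 - (r + c) * x0 < mu x - (r + c) * x) by (apply hincr; [unfold x0; lra| unfold x; lra]).
      unfold x in *. lra. }
    assert (A2 : (mu x0 + (r + c) * s) * psi1 x <= mu x * psi1 x) by (apply Rmult_le_compat_r; lra).
    assert (Hma : - Rabs (mu x0) <= mu x0) by (pose proof (Rle_abs (- mu x0)); rewrite Rabs_Ropp in H; lra).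
    assert (A3 : p * (r * psi x0 / p + 1) <= psi1 x * (mu x0 + c * s)).
    { apply Rmult_le_compat; lra. }
    assert (A4 : p * (r * psi x0 / p + 1) = r * psi x0 + p) by (field; lra).
    assert (A5 : r * psi x <= r * psi x0 + r * (psi1 x * s)) by (rewrite <- Rmult_plus_distr_l; apply Rmult_le_compat_l; lra).
    assert (Hx0 : 0 <= x) by (unfold x, x0 in *; lra).
    specialize (hode x Hx0). specialize (Hs2 x Hx0).
    assert (0 < (sigma x) ^ 2 / 2 * psi2 x) by (apply Rmult_lt_0_compat; [exact Hs2| apply Hall; unfold x, x0 in *; lra]).
    nra. }
  destruct HA as [x1 [Hx1k Hx1]].
  set (E := fun v => exists x, kappa <= x /\ psi2 x <= 0 /\ v = - x).
  assert (HEb : bound E) by (exists (- kappa); intros v [x [Hx [_ ->]]]; lra).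
  assert (HEn : exists v, E v) by (exists (- x1); exists x1; auto).
  destruct (completeness E HEb HEn) as [m [Hub Hlub]].
  set (b2 := - m).
  assert (Hb2k : kappa <= b2).
  { unfold b2. assert (m <= - kappa). apply Hlub. intros v [x [Hx [_ ->]]]; lra. lra. }
  assert (Hb2p : forall x, kappa < x < b2 -> 0 < psi2 x).
  { intros x Hx. destruct (Rlt_or_le 0 (psi2 x)) as [H|H]. exact H. exfalso.
    assert (- x <= m) by (apply Hub; exists x; repeat split; lra). unfold b2 in Hx; lra. }
  assert (Hb2n : forall x, b2 < x -> psi2 x < 0).
  { intros x Hx. apply NNPP. intro Hno.
    assert (m <= - x).
    { apply Hlub. intros v [x' [Hx' [Hp ->]]].
      destruct (Rle_or_lt x x') as [H|H]. lra. exfalso. apply Hno. apply (HPneg x' Hx' Hp x H). }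
    unfold b2 in Hx; lra. }
  split.
  { exists b2. split. split; [exact Hb2k| split; assumption].
    intros b' [Hk' [Hp' Hn']].
    destruct (Rtotal_order b2 b') as [H|[H|H]]; [exfalso| exact H| exfalso].
    - assert (psi2 ((b2 + b') / 2) < 0) by (apply Hb2n; lra).
      assert (0 < psi2 ((b2 + b') / 2)) by (apply Hp'; lra). lra.
    - assert (psi2 ((b2 + b') / 2) < 0) by (apply Hn'; lra).
      assert (0 < psi2 ((b2 + b') / 2)) by (apply Hb2p; lra). lra. }
  set (xb := b2 + 1).
  assert (Hxb : 0 < xb) by (unfold xb; lra).
  assert (Hdec : forall x y, xb <= x -> x <= y -> psi1 y <= psi1 x).
  { apply (mono_dec psi1 psi2 xb). intros x Hx. apply (proj1 (proj2 (HC x ltac:(lra)))).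
    intros x Hx. left. apply Hb2n. unfold xb in Hx; lra. }
  assert (Claim : forall eps, 0 < eps -> exists x, xb <= x /\ psi1 x < eps).
  { intros eps He. apply NNPP. intro Hno.
    assert (Hall : forall x, xb <= x -> eps <= psi1 x).
    { intros x Hx. destruct (Rlt_or_le (psi1 x) eps) as [H|H]; [|exact H]. exfalso. apply Hno. exists x. split; assumption. }
    set (E' := fun v => exists x, xb <= x /\ v = - psi1 x).
    assert (HEb' : bound E') by (exists (- eps); intros v [x [Hx ->]]; specialize (Hall x Hx); lra).
    assert (HEn' : exists v, E' v) by (exists (- psi1 xb); exists xb; split; [lra| reflexivity]).
    destruct (completeness E' HEb' HEn') as [m' [Hub' Hlub']].
    set (l := - m').
    assert (Hl1 : forall x, xb <= x -> l <= psi1 x).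
    { intros x Hx. assert (- psi1 x <= m') by (apply Hub'; exists x; split; [exact Hx| reflexivity]). unfold l; lra. }
    assert (Hle : eps <= l).
    { assert (m' <= - eps). apply Hlub'. intros v [x [Hx ->]]. specialize (Hall x Hx). lra. unfold l; lra. }
    assert (Hl2 : forall eta, 0 < eta -> exists x, xb <= x /\ psi1 x < l + eta).
    { intros eta Heta. apply NNPP. intro Hn2.
      assert (m' <= - (l + eta)).
      { apply Hlub'. intros v [x [Hx ->]].
        destruct (Rlt_or_le (psi1 x) (l + eta)) as [H|H]; [|lra]. exfalso. apply Hn2. exists x. split; assumption. }
      unfold l in *; lra. }
    destruct hsig as [Ls HLs].
    set (L := Rabs Ls + 1).
    assert (HL : 0 < L) by (unfold L; pose proof (Rabs_pos Ls); lra).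
    assert (HsigL : forall y, 0 <= y -> sigma y <= sigma 0 + L * y).
    { intros y Hy. specialize (HLs y 0 Hy (Rle_refl 0)). rewrite Rminus_0_r, (Rabs_pos_eq y Hy) in HLs.
      pose proof (Rle_abs (sigma y - sigma 0)).
      assert (Ls * y <= Rabs Ls * y) by (apply Rmult_le_compat_r; [lra| apply Rle_abs]).
      assert (Rabs Ls * y <= L * y) by (apply Rmult_le_compat_r; unfold L; lra). lra. }
    assert (Hcl : 0 < c * l) by (apply Rmult_lt_0_compat; lra).
    set (K := c * l / (16 * (L * L))).
    assert (HK : 0 < K) by (unfold K; apply Rdiv_lt_0_compat; [lra| apply Rmult_lt_0_compat; [lra| apply Rmult_lt_0_compat; lra]]).
    set (eta := Rmin (c * l / (2 * r)) K).
    assert (Heta : 0 < eta) by (unfold eta; apply Rmin_glb_lt; [apply Rdiv_lt_0_compat; lra| exact HK]).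
    assert (HetaK : eta <= K) by apply Rmin_r.
    assert (Hreta : r * eta <= c * l / 2).
    { assert (eta <= c * l / (2 * r)) by apply Rmin_l.
      assert (r * eta <= r * (c * l / (2 * r))) by (apply Rmult_le_compat_l; lra).
      replace (r * (c * l / (2 * r))) with (c * l / 2) in H0 by (field; lra). exact H0. }
    destruct (Hl2 eta Heta) as [x0 [Hx0b Hx0]].
    set (A := r * psi x0 - l * mu x0).
    set (S := 1 + 4 * Rabs A / (c * l) + (Rabs (sigma 0) + L * x0) / L + Rabs (mu x0) / (r + c)).
    assert (T1 : 0 <= 4 * Rabs A / (c * l)) by (apply Rdiv_le_0_compat; [pose proof (Rabs_pos A); lra| lra]).
    assert (T2 : 0 <= (Rabs (sigma 0) + L * x0) / L) by (apply Rdiv_le_0_compat; [pose proof (Rabs_pos (sigma 0)); assert (0 <= L * x0) by (apply Rmult_le_pos; lra); lra| lra]).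
    assert (T3 : 0 <= Rabs (mu x0) / (r + c)) by (apply Rdiv_le_0_compat; [apply Rabs_pos| lra]).
    assert (HS1 : 1 <= S) by (unfold S; lra).
    assert (HSA : Rabs A <= c * l * S / 4).
    { assert (c * l * (4 * Rabs A / (c * l)) / 4 = Rabs A) by (field; lra).
      assert (c * l * (4 * Rabs A / (c * l)) / 4 <= c * l * S / 4).
      { apply Rmult_le_compat_r. lra. apply Rmult_le_compat_l. lra. unfold S; lra. } lra. }
    assert (HSs : Rabs (sigma 0) + L * x0 <= L * S).
    { assert (L * ((Rabs (sigma 0) + L * x0) / L) = Rabs (sigma 0) + L * x0) by (field; lra).
      assert (L * ((Rabs (sigma 0) + L * x0) / L) <= L * S) by (apply Rmult_le_compat_l; unfold S; lra). lra. }
    assert (HSm : Rabs (mu x0) <= (r + c) * S).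
    { assert ((r + c) * (Rabs (mu x0) / (r + c)) = Rabs (mu x0)) by (field; lra).
      assert ((r + c) * (Rabs (mu x0) / (r + c)) <= (r + c) * S) by (apply Rmult_le_compat_l; unfold S; lra). lra. }
    assert (Hbnd : forall s, S <= s -> s * psi2 (x0 + s) <= - (c * l) / (8 * (L * L))).
    { intros s Hs. set (xi := x0 + s).
      assert (Hxi0 : 0 <= xi) by (unfold xi; lra).
      destruct (mvt' psi psi1 x0 xi) as [th [Hth Hmvt]]. unfold xi; lra.
      { intros t Ht. apply (proj1 (HC t ltac:(lra))). }
      assert (Hth1 : psi1 th <= psi1 x0) by (apply Hdec; lra).
      replace (xi - x0) with s in Hmvt by (unfold xi; ring).
      assert (P1 : psi1 th * s <= (l + eta) * s) by (apply Rmult_le_compat_r; lra).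
      assert (Hmu : mu x0 + (r + c) * s < mu xi).
      { assert (mu x0 - (r + c) * x0 < mu xi - (r + c) * xi) by (apply hincr; [unfold xb in Hx0b; lra| unfold xi; lra]).
        unfold xi in *. lra. }
      assert (Hma : 0 <= mu x0 + (r + c) * s).
      { pose proof (Rle_abs (- mu x0)). rewrite Rabs_Ropp in H.
        assert ((r + c) * S <= (r + c) * s) by (apply Rmult_le_compat_l; lra). lra. }
      assert (P2 : (mu x0 + (r + c) * s) * l <= mu xi * psi1 xi).
      { apply Rmult_le_compat; try lra. apply Hl1. unfold xi; lra. }
      assert (P3 : r * psi xi <= r * psi x0 + r * ((l + eta) * s)).
      { rewrite <- Rmult_plus_distr_l. apply Rmult_le_compat_l; lra. }
      assert (P4 : r * eta * s <= c * l / 2 * s) by (apply Rmult_le_compat_r; lra).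
      assert (P5 : c * l * S <= c * l * s) by (apply Rmult_le_compat_l; lra).
      pose proof (Rle_abs A).
      assert (Hh : r * psi xi - mu xi * psi1 xi <= - (c * l * s) / 4).
      { unfold A in *. nra. }
      assert (Hsx : 0 < sigma xi) by (apply hsigpos; lra).
      assert (Hsx2 : sigma xi <= 2 * L * s).
      { specialize (HsigL xi Hxi0). pose proof (Rle_abs (sigma 0)).
        assert (L * xi = L * x0 + L * s) by (unfold xi; ring).
        assert (L * S <= L * s) by (apply Rmult_le_compat_l; lra). lra. }
      assert (Hsq : (sigma xi) ^ 2 / 2 <= 2 * (L * L) * (s * s)).
      { assert (sigma xi * sigma xi <= (2 * L * s) * (2 * L * s)) by (apply Rmult_le_compat; lra). simpl. lra. }
      assert (Hp2 : psi2 xi < 0) by (apply Hb2n; unfold xi, xb in *; lra).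
      specialize (hode xi Hxi0).
      assert (Q1 : 2 * (L * L) * (s * s) * psi2 xi <= (sigma xi) ^ 2 / 2 * psi2 xi).
      { assert (0 <= (2 * (L * L) * (s * s) - (sigma xi) ^ 2 / 2) * (- psi2 xi)) by (apply Rmult_le_pos; lra).
        nra. }
      assert (HLL : 0 < L * L) by (apply Rmult_lt_0_compat; lra).
      assert (Hs0 : 0 < s) by lra.
      destruct (Rle_or_lt (s * psi2 xi) (- (c * l) / (8 * (L * L)))) as [Hw|Hw]; [exact Hw| exfalso].
      assert (W1 : 2 * (L * L) * (- (c * l) / (8 * (L * L))) < 2 * (L * L) * (s * psi2 xi)) by (apply Rmult_lt_compat_l; lra).
      replace (2 * (L * L) * (- (c * l) / (8 * (L * L)))) with (- (c * l) / 4) in W1 by (field; lra).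
      assert (W2 : s * (- (c * l) / 4) < s * (2 * (L * L) * (s * psi2 xi))) by (apply Rmult_lt_compat_l; lra).
      replace (s * (2 * (L * L) * (s * psi2 xi))) with (2 * (L * L) * (s * s) * psi2 xi) in W2 by ring.
      lra. }
    destruct (mvt' psi1 psi2 (x0 + S) (x0 + 2 * S)) as [th [Hth Hmvt]]. lra.
    { intros t Ht. apply (proj1 (proj2 (HC t ltac:(lra)))). }
    replace (x0 + 2 * S - (x0 + S)) with S in Hmvt by ring.
    assert (Hb := Hbnd (th - x0) ltac:(lra)). replace (x0 + (th - x0)) with th in Hb by ring.
    assert (Hp2 : psi2 th < 0) by (apply Hb2n; unfold xb in *; lra).
    assert (Q3 : psi2 th * S <= psi2 th * ((th - x0) / 2)) by (apply Rmult_le_compat_neg_l; lra).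
    assert (Q4 : psi2 th * ((th - x0) / 2) = (th - x0) * psi2 th / 2) by field.
    assert (Q5 : - (c * l) / (8 * (L * L)) / 2 = - K) by (unfold K; field; lra).
    assert (Q6 : psi1 (x0 + S) <= psi1 x0) by (apply Hdec; lra).
    assert (Q7 : l <= psi1 (x0 + 2 * S)) by (apply Hl1; lra).
    lra. }
  apply is_lim_seq_spec. intro eps.
  destruct (Claim eps (cond_pos eps)) as [x [Hx Hpx]].
  destruct (INR_unbounded x) as [N HN]. exists N. intros n Hn. apply le_INR in Hn.
  assert (Hn0 : 0 <= INR n) by apply pos_INR.
  rewrite Rminus_0_r, Rabs_pos_eq by (left; apply HI; exact Hn0).
  assert (psi1 (INR n) <= psi1 x) by (apply Hdec; lra). lra.
Qed.
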